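(* Let $d\ge 1$ and let $(f_0, f_1, \ldots, f_{d-1})$ be a finite sequence of integers with $f_i > 0$ for all $i$. Put $f_{-1}=1$. The following conditions are equivalent: (i) there is a quasi-forest $\Delta$ of dimension $d-1$ with $f(\Delta) = (f_0, \ldots, f_{d-1})$; (ii) there is a forest $\Delta$ of dimension $d-1$ with $f(\Delta) = (f_0, \ldots, f_{d-1})$; (iii) the integers $c_0,\ldots,c_d$ defined by $\sum_{i=0}^{d} f_{i-1}(x-1)^{i} = \sum_{i=0}^{d} c_i x^i$ satisfy $\sum_{i=k}^{d} c_i > 0$ for each $1 \le k \le d$; (iv) the integers $b_1,\ldots,b_d$ defined by $\sum_{i=1}^{d} f_{i-1}(x-1)^{i-1} = \sum_{i=1}^{d} b_i x^{i-1}$ satisfy $b_i > 0$ for all $1 \le i \le d$.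
   Context: A simplicial complex $\Delta$ on $[n]=\{1,\ldots,n\}$ is a collection of subsets of $[n]$ such that $\{i\}\in\Delta$ for every $i\in[n]$ and $G\subset F\in\Delta$ implies $G\in\Delta$. If $d=\max\{|F|:F\in\Delta\}$, then $\dim\Delta=d-1$. Facets are maximal faces. The $f$-vector is $f(\Delta)=(f_0,\ldots,f_{d-1})$, where $f_i$ is the number of faces with $i+1$ elements. For facets $F_{i_1},\ldots,F_{i_q}$, $\langle F_{i_1},\ldots,F_{i_q}\rangle$ denotes the subcomplex consisting of all faces contained in some $F_{i_j}$. A facet $F$ of $\Delta$ is a leaf if there is a facet $G\neq F$ (a branch of $F$) with $H\cap F\subset G\cap F$ for all facets $H\neq F$. A quasi-forest is a simplicial complex whose facets admit an ordering $F_1,\ldots,F_s$ (a leaf order) such that for each $1<j\le s$, $F_j$ is a leaf of $\langle F_1,\ldots,F_j\rangle$. A forest is a simplicial complex such that for every nonempty subset $\{F_{i_1},\ldots,F_{i_q}\}$ of its facets, the subcomplex $\langle F_{i_1},\ldots,F_{i_q}\rangle$ has a leaf. (Here a complex with a single facet is regarded as a quasi-forest and forest, its single facet counting as a leaf.) *)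

(* Defs.v *)
From HB Require Import structures.
From mathcomp Require Import all_boot all_order all_algebra.
Set Implicit Arguments. Unset Strict Implicit. Unset Printing Implicit Defensive.
Import Order.TTheory GRing.Theory Num.Theory.

Definition is_complex (n : nat) (D : {set {set 'I_n}}) : Prop :=
  (forall i : 'I_n, [set i] \in D) /\
  (forall F G : {set 'I_n}, G \subset F -> F \in D -> G \in D).

Section Complexes.
Variable T : finType.

Definition facets (D : {set {set T}}) : {set {set T}} :=
  [set F in D | [forall G in D, (F \subset G) ==> (G == F)]].

Definition gen (S : {set {set T}}) : {set {set T}} :=
  [set G : {set T} | [exists F in S, G \subset F]].

Definition is_leaf (D : {set {set T}}) (F : {set T}) : bool :=
  (F \in facets D) &&
  ((#|facets D| == 1%N) ||
   [exists G in facets D, (G != F) &&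
      [forall H in facets D, (H != F) ==> (H :&: F \subset G :&: F)]]).

Definition has_leaf (D : {set {set T}}) : bool := [exists F, is_leaf D F].

Definition quasi_forest (D : {set {set T}}) : Prop :=
  exists s : seq {set T},
    [/\ uniq s, [set F in s] = facets D &
        forall j : nat, (1 <= j < size s)%N ->
          is_leaf (gen [set F in take j.+1 s]) (nth set0 s j)].

Definition forest (D : {set {set T}}) : Prop :=
  forall S : {set {set T}}, S != set0 -> S \subset facets D -> has_leaf (gen S).

Definition fvec (D : {set {set T}}) (i : nat) : nat :=
  #|[set F in D | #|F| == i.+1]|.

(* d = max |F| ; dim D = d - 1 *)
Definition dimp1 (D : {set {set T}}) : nat := \max_(F in D) #|F|.

End Complexes.

Definition has_fvector (n : nat) (D : {set {set 'I_n}}) (f : seq int) : Prop :=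
  dimp1 D = size f /\ forall i : nat, (i < size f)%N -> ((fvec D i)%:Z = f`_i)%R.

(* f_{i-1} with f_{-1} = 1 *)
Definition fm1 (f : seq int) (i : nat) : int := if i is j.+1 then f`_j else 1%R.

Definition cpoly (f : seq int) : {poly int} :=
  (\sum_(i < (size f).+1) fm1 f i *: ('X - 1) ^+ i)%R.

(* sum_{i=1}^d f_{i-1} (x-1)^{i-1} = sum b_i x^{i-1} ; b_i = (bpoly f)`_(i-1) *)
Definition bpoly (f : seq int) : {poly int} :=
  (\sum_(i < size f) f`_i *: ('X - 1) ^+ i)%R.

(* Main.v *)
Require Import Defs.
From HB Require Import structures.
From mathcomp Require Import all_boot all_order all_algebra.
From mathcomp Require Import zify ring.
Set Implicit Arguments. Unset Strict Implicit. Unset Printing Implicit Defensive.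
Import Order.TTheory GRing.Theory Num.Theory.

Local Open Scope ring_scope.

Definition Qp (T : finType) (A : {set {set T}}) : {poly int} :=
  \sum_(X in A) ('X - 1) ^+ #|X|.

Lemma sum_by_card (T : finType) (V : nmodType) (A : {set {set T}})
   (g : nat -> V) (K : nat) :
  (forall X, X \in A -> (#|X| <= K)%N) ->
  \sum_(X in A) g #|X| = \sum_(i < K.+1) g i *+ #|[set X in A | #|X| == i]|.
Proof.
move=> HK.
rewrite (@partition_big _ _ _ _ _ _ (fun X => X \in A) (fun X => (inord #|X| : 'I_K.+1)) xpredT) //=.
apply: eq_bigr => i _.
rewrite -sumr_const.
apply: eq_big => X.
  rewrite inE; case XA: (X \in A) => //=.
  have hX : (#|X| < K.+1)%N by rewrite ltnS; exact: HK.
  apply/eqP/eqP => [<-|He]; first by rewrite inordK.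
  by apply: val_inj; rewrite /= He inordK.
by move=> /andP[XA /eqP <-]; rewrite inordK // ltnS; exact: HK.
Qed.

Lemma Qp_pow (T : finType) (E : {set T}) : Qp (powerset E) = 'X ^+ #|E|.
Proof.
rewrite /Qp (@sum_by_card _ _ _ (fun i => ('X - 1) ^+ i) #|E|); last first.
  by move=> X; rewrite powersetE; exact: subset_leq_card.
rewrite -[in RHS](subrK 1 'X) exprD1n.
apply: eq_bigr => i _; congr (_ *+ _).
rewrite -cards_draws; apply: eq_card => X; rewrite !inE.
done.
Qed.

Lemma Qp_union (T : finType) (A B : {set {set T}}) :
  Qp (A :|: B) = Qp A + Qp B - Qp (A :&: B).
Proof.
rewrite /Qp (big_setID (A := A :|: B) B) (big_setID (A := A) B) /=.
rewrite setUC setUK setDUl setDv ?setU0 ?set0U.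
by ring.
Qed.

Lemma gen_rcons (T : finType) (s : seq {set T}) F :
  gen [set x in rcons s F] = gen [set x in s] :|: powerset F.
Proof.
apply/setP => X; rewrite !inE; apply/existsP/orP.
  case=> G /andP[]; rewrite inE mem_rcons inE => /orP[/eqP->|Gs] XG.
    by right.
  by left; apply/existsP; exists G; rewrite inE Gs.
case=> [/existsP[G /andP[]]|XF].
  by rewrite inE => Gs XG; exists G; rewrite inE mem_rcons inE Gs orbT.
by exists F; rewrite inE mem_rcons inE eqxx.
Qed.

Lemma gen_nil (T : finType) : gen [set x in [::]] = set0 :> {set {set T}}.
Proof. by apply/setP => X; rewrite !inE; apply/existsP => -[G]; rewrite inE. Qed.

Lemma gen_cap (T : finType) (s : seq {set T}) F G :
  G \in s -> (forall H, H \in s -> H :&: F \subset G :&: F) ->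
  gen [set x in s] :&: powerset F = powerset (G :&: F).
Proof.
move=> Gs HG; apply/setP=> X; rewrite !inE; apply/andP/idP.
  case=> /existsP[H /andP[]]; rewrite inE => Hs XH XF.
  by apply: subset_trans (HG H Hs); rewrite subsetI XH XF.
move=> XGF; split; last exact: subset_trans XGF (subsetIr _ _).
by apply/existsP; exists G; rewrite inE Gs /=; apply: subset_trans XGF (subsetIl _ _).
Qed.

Lemma Qp_step (T : finType) (s : seq {set T}) F G :
  G \in s -> (forall H, H \in s -> H :&: F \subset G :&: F) ->
  Qp (gen [set x in rcons s F]) = Qp (gen [set x in s]) + 'X ^+ #|F| - 'X ^+ #|G :&: F|.
Proof.
move=> Gs HG; by rewrite gen_rcons Qp_union (gen_cap Gs HG) !Qp_pow.
Qed.

Lemma Qp_single (T : finType) (F : {set T}) :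
  Qp (gen [set x in [:: F]]) = 'X ^+ #|F|.
Proof.
have -> : [:: F] = rcons [::] F by [].
rewrite gen_rcons gen_nil set0U Qp_pow //.
Qed.

Lemma facets_gen (T : finType) (S : {set {set T}}) :
  (forall A B, A \in S -> B \in S -> A \subset B -> A = B) -> facets (gen S) = S.
Proof.
move=> anti; apply/setP => F; rewrite !inE; apply/andP/idP.
  case=> /existsP[G /andP[GS FG]] /forallP max.
  have : G \in gen S by rewrite inE; apply/existsP; exists G; rewrite GS subxx.
  by move=> /(implyP (max G)) /implyP /(_ FG) /eqP <-.
move=> FS; split.
  by apply/existsP; exists F; rewrite FS subxx.
apply/forallP => G; apply/implyP; rewrite inE => /existsP[H /andP[HS GH]].
apply/implyP => FG.
have FH : F \subset H by exact: subset_trans FG GH.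
have eFH := anti F H FS HS FH.
by rewrite eqEsubset FG andbT -eFH in GH *.
Qed.

Lemma facets_anti (T : finType) (D : {set {set T}}) A B :
  A \in facets D -> B \in facets D -> A \subset B -> A = B.
Proof.
rewrite !inE => /andP[AD /forallP mA] /andP[BD _] AB.
by have /implyP/(_ BD)/implyP/(_ AB)/eqP := mA B.
Qed.

Lemma gen_facets n (D : {set {set 'I_n}}) : is_complex D -> gen (facets D) = D.
Proof.
case=> _ cl; apply/setP => X; rewrite inE; apply/existsP/idP.
  by case=> F /andP[]; rewrite inE => /andP[FD _] XF; exact: (cl F X XF FD).
move=> XD.
have P0 : (fun F => (F \in D) && (X \subset F)) X by rewrite /= XD subxx.
case: (@arg_maxnP _ X (fun F => (F \in D) && (X \subset F)) (fun F => #|F|) P0) => F /andP[FD XF] Fmax.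
exists F; rewrite XF andbT inE FD /=.
apply/forallP => G; apply/implyP => GD; apply/implyP => FG.
have := Fmax G; rewrite GD (subset_trans XF FG) => /(_ isT) GF.
by rewrite eq_sym eqEcard FG.

Qed.
Lemma forest_qf (T : finType) (D : {set {set T}}) : forest D -> quasi_forest D.
Proof.
move=> fD.
suff H : forall S : {set {set T}}, S \subset facets D -> exists s : seq {set T},
   [/\ uniq s, [set F in s] = S & forall j : nat, (1 <= j < size s)%N ->
          is_leaf (gen [set F in take j.+1 s]) (nth set0 s j)].
  exact: H (subxx _).
move=> S; have [m] := ubnP #|S|; elim: m S => // m IH S.
rewrite ltnS => Sm SD.
have [->|S0] := eqVneq S set0.
  by exists [::]; split => // j; rewrite andbF.
have antiS : forall A B, A \in S -> B \in S -> A \subset B -> A = B.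
  by move=> A B AS BS; apply: facets_anti; apply: (subsetP SD).
have /existsP[F lF] := fD S S0 SD.
have FS : F \in S by move: (lF) => /andP[]; rewrite facets_gen.
have Sm' : (#|S :\ F| < m)%N by move: Sm; rewrite (cardsD1 F S) FS.
have [s [us es ls]] := IH (S :\ F) Sm' (subset_trans (subD1set S F) SD).
have Fs : F \notin s.
  by move/setP: es => /(_ F); rewrite !inE eqxx /= => ->.
have es' : [set x in rcons s F] = S.
  apply/setP => x; rewrite inE mem_rcons inE.
  move/setP: (es) => /(_ x); rewrite !inE => ->.
  by case: eqVneq => [->|].
exists (rcons s F); split => //.
  by rewrite rcons_uniq us Fs.
move=> j; rewrite size_rcons => /andP[j1 js].
rewrite nth_rcons.
have [jlt|jge] := ltnP j (size s).
  by rewrite -cats1 takel_cat //; apply: ls; rewrite j1 jlt.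
have ej : j = size s by apply/eqP; rewrite eqn_leq jge -ltnS js.
subst j; rewrite eqxx take_oversize ?size_rcons // es'.
done.
Qed.

Definition tl (N k : nat) (p : {poly int}) : int := \sum_(k <= i < N) p`_i.

Lemma tlD N k p q : tl N k (p + q) = tl N k p + tl N k q.
Proof. by rewrite /tl -big_split; apply: eq_bigr => i _; rewrite coefD. Qed.

Lemma tlB N k p q : tl N k (p - q) = tl N k p - tl N k q.
Proof. by rewrite /tl -sumrB; apply: eq_bigr => i _; rewrite coefB. Qed.

Lemma tlX N k m : (m < N)%N -> tl N k ('X^m) = (k <= m)%:R.
Proof.
move=> mN; rewrite /tl; under eq_bigr do rewrite coefXn.
case: (leqP k m) => km.
  rewrite (@big_cat_nat _ _ _ m) //= ?(ltnW mN) // (big_ltn mN) eqxx.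
  rewrite big_nat_cond big1; last first.
    by move=> i /andP[/andP[_ im] _]; rewrite ltn_eqF.
  rewrite big_nat_cond big1 ?addr0 ?add0r //.
  by move=> i /andP[/andP[mi _] _]; rewrite gtn_eqF.
rewrite big_nat_cond big1 //.
move=> i /andP[/andP[ki _] _]; rewrite gtn_eqF //.
exact: leq_trans km ki.
Qed.

Lemma tl_step N k p m r : (r <= m < N)%N ->
  tl N k (p + 'X^m - 'X^r) = tl N k p + ((r < k <= m) : nat)%:R.
Proof.
move=> /andP[rm mN]; rewrite tlB tlD !tlX //; last exact: leq_ltn_trans rm mN.
rewrite -addrA; congr (_ + _).
case: (leqP k r) => kr.
  by rewrite (leq_trans kr rm) subrr.
by rewrite mulr0n subr0.
Qed.

Lemma qf_tail n (D : {set {set 'I_n}}) f :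
  (forall i : nat, (i < size f)%N -> (0 < f`_i)%R) ->
  is_complex D -> quasi_forest D -> has_fvector D f ->
  forall k, (1 <= k <= size f)%N -> 0 < \sum_(k <= i < (size f).+1) (cpoly f)`_i.
Proof.
move=> fpos cD [s [us es ls]] [dD fD] k /andP[k1 kd].
have Dle : forall X, X \in D -> (#|X| <= size f)%N.
  by move=> X XD; rewrite -dD; exact: (@leq_bigmax_cond _ (fun F => F \in D) (fun F => #|F|) X XD).
have D0 : D = gen [set F in s] by rewrite es gen_facets.
have set0D : set0 \in D.
  have := fD 0%N (leq_trans k1 kd); have := fpos 0%N (leq_trans k1 kd).
  move=> h1 h2; rewrite -h2 ltz_nat card_gt0 in h1.
  case/set0Pn: h1 => X; rewrite inE => /andP[XD _].
  by case: cD => _ cl; apply: (cl X); rewrite ?sub0set.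
have Qeq : Qp D = cpoly f.
  rewrite /Qp (@sum_by_card _ _ _ (fun i => ('X-1)^+i) (size f) Dle) /cpoly.
  apply: eq_bigr => -[i /= hi] _.
  rewrite -scaler_nat natz; congr (_ *: _).
  case: i hi => [|j] hj /=.
    have -> : [set X in D | #|X| == 0%N] = [set set0].
      apply/setP => X; rewrite !inE cards_eq0.
      by case: eqVneq => [->|]; rewrite ?andbT ?andbF.
    by rewrite cards1.
  by rewrite -(fD j hj).
have Fs : forall F, F \in s -> F \in D /\ (#|F| <= size f)%N.
  move=> F Fin; have : F \in [set x in s] by rewrite inE.
  by rewrite es inE => /andP[FD _]; split => //; apply: Dle.
have inv : forall j, (0 < j <= size s)%N ->
   (forall k, 0 <= tl (size f).+1 k (Qp (gen [set F in take j s]))) /\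
   (forall F, F \in take j s -> forall k, (0 < k <= #|F|)%N ->
         0 < tl (size f).+1 k (Qp (gen [set F in take j s]))).
  elim=> // j IH /andP[_ js].
  case: j IH js => [|j] IH js.
    rewrite (take_nth set0 js) take0 /= Qp_single.
    have [_ mF] := Fs (nth set0 s 0) (mem_nth set0 js).
    rewrite /= in mF.
    split => [k'|F']; first by rewrite tlX ?ltnS // ler0n.
    rewrite inE => /eqP -> k' /andP[_ km]; by rewrite tlX ?ltnS // km ltr0n.
  have [IHa IHb] := IH (ltnW js).
  set t := take j.+1 s; set F := nth set0 s j.+1.
  have et : take j.+2 s = rcons t F := take_nth set0 js.
  have ut : uniq (rcons t F) by rewrite -et take_uniq.
  have Ft : F \notin t by move: ut; rewrite rcons_uniq => /andP[].
  have hl := ls j.+1 js.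
  rewrite et in hl.
  have fct : facets (gen [set x in rcons t F]) = [set x in rcons t F].
    apply: facets_gen => A B; rewrite !inE -et => As Bs.
    by apply: (@facets_anti _ D); rewrite -es inE; [exact: mem_take As | exact: mem_take Bs].
  move: hl; rewrite /is_leaf fct => /andP[_ /orP[]].
    by rewrite cardsE (card_uniqP ut) size_rcons /t size_takel // ltnW.
  move=> /existsP[G /and3P[Gin GF /forallP HG]].
  have Gt : G \in t by move: Gin; rewrite inE mem_rcons inE (negbTE GF).
  have HGt : forall H, H \in t -> H :&: F \subset G :&: F.
    move=> H Ht; have /implyP := HG H; rewrite inE mem_rcons inE Ht orbT.
    move=> /(_ isT) /implyP; apply; by apply/eqP => HF; move: Ht; rewrite HF (negbTE Ft).
  rewrite et (Qp_step Gt HGt).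
  have [FD mF] := Fs F (mem_nth set0 js).
  have rm : (#|G :&: F| <= #|F|)%N := subset_leq_card (subsetIr G F).
  have rG : (#|G :&: F| <= #|G|)%N := subset_leq_card (subsetIl G F).
  have hN : (#|G :&: F| <= #|F| < (size f).+1)%N by rewrite rm ltnS.
  split.
    by move=> k'; rewrite tl_step //; apply: addr_ge0 (IHa k') (ler0n _ _).
  move=> F'; rewrite mem_rcons inE => /orP[/eqP->|F't] k' /andP[k0 kF];
    rewrite tl_step //; last by apply: ltr_wpDr (ler0n _ _) (IHb F' F't k' _); rewrite k0.
  case: (leqP k' #|G :&: F|) => kr.
    by apply: ltr_wpDr (ler0n _ _) (IHb G Gt k' _); rewrite k0 (leq_trans kr rG).
  by apply: ltr_pwDr (IHa k'); rewrite kF ltr0n.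
have [X0 X0D eX0] := @eq_bigmax_cond _ (fun X => X \in D) (fun X => #|X|)
   (introT card_gt0P (ex_intro _ set0 set0D)).
move: (X0D); rewrite D0 inE => /existsP[F /andP[]]; rewrite inE => Fin X0F.
have kF : (0 < k <= #|F|)%N.
  rewrite k1 /= (leq_trans kd) // -dD /dimp1 eX0; exact: subset_leq_card.
have s0 : (0 < size s)%N by case: (s) Fin.
have [_ h] := inv (size s) (introT andP (conj s0 (leqnn _))).
rewrite take_size -D0 Qeq in h.
exact: h F Fin k kF.
Qed.

Lemma cpolyE f : cpoly f = 1 + ('X - 1) * bpoly f.
Proof.
rewrite /cpoly big_ord_recl /= expr0 scale1r; congr (_ + _).
rewrite /bpoly mulr_sumr; apply: eq_bigr => i _.
by rewrite exprS scalerAr.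
Qed.

Lemma size_bpoly f : (size (bpoly f) <= size f)%N.
Proof.
rewrite /bpoly; apply: (leq_trans (size_sum _ _ _)); apply/bigmax_leqP => i _.
apply: (leq_trans (size_scale_leq _ _)).
have -> : ('X - 1 : {poly int}) = 'X - 1%:P by rewrite polyC1.
by rewrite size_exp_XsubC.
Qed.

Lemma tail_cb f k : (1 <= k <= size f)%N ->
  \sum_(k <= i < (size f).+1) (cpoly f)`_i = (bpoly f)`_k.-1.
Proof.
move=> /andP[k1 kd]; rewrite cpolyE.
rewrite (@telescope_sumr_eq _ _ _ (fun i => - (bpoly f)`_i.-1)); last 2 first.
- exact: leq_trans kd _.
- move=> i /andP[ki _]; case: i ki => [|i] ki; first by rewrite leqn0 in ki; move: k1; rewrite (eqP ki).
  rewrite coefD coef1 mulrBl mul1r coefB coefXM /=.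
  by rewrite add0r opprK addrC.
rewrite /= [(bpoly f)`_(size f)]nth_default ?size_bpoly // oppr0 add0r opprK.
done.
Qed.

Lemma coef_shift K (a a' : nat -> int) :
  \sum_(i < K) a i *: ('X - 1)^+i = \sum_(i < K) a' i *: ('X - 1)^+i ->
  forall i, (i < K)%N -> a i = a' i.
Proof.
move=> /(congr1 (comp_poly ('X + 1))).
have E (b : nat -> int) :
    comp_poly ('X + 1) (\sum_(i < K) b i *: ('X - 1)^+i) = \poly_(i < K) b i.
  rewrite poly_def.
  apply: (big_ind2 (fun p q => comp_poly ('X + 1) p = q)).
  - exact: comp_poly0.
  - by move=> p1 q1 p2 q2 <- <-; rewrite comp_polyD.
  move=> i _.
  by rewrite comp_polyZ rmorphXn /= comp_polyB comp_polyX comp_polyC addrK.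
rewrite !E => e i iK.
by move/polyP: e => /(_ i); rewrite !coef_poly iK.
Qed.

Lemma Qp_card (T : finType) (D : {set {set T}}) K :
  (forall X, X \in D -> (#|X| <= K)%N) ->
  Qp D = \sum_(i < K.+1) (#|[set X in D | #|X| == i]|)%:Z *: ('X - 1)^+i.
Proof.
move=> HK; rewrite /Qp (@sum_by_card _ _ _ (fun i => ('X-1)^+i) K HK).
by apply: eq_bigr => i _; rewrite -scaler_nat natz.
Qed.

Definition lvl (d : nat) (L : seq nat) (t : nat) : nat :=
  if t is u.+1 then nth 0%N L u else d.

Definition Fc (n d : nat) (L : seq nat) (t : nat) : {set 'I_n} :=
  [set x : 'I_n | (x < lvl d L t)%N || ((0 < t)%N && (val x == d + t.-1)%N)].

Lemma card_core n a : (a <= n)%N -> #|[set x : 'I_n | (x < a)%N]| = a.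
Proof.
elim: a => [|a IH] an.
  by apply/eqP; rewrite cards_eq0; apply/eqP/setP => x; rewrite !inE.
have -> : [set x : 'I_n | (x < a.+1)%N] = (Ordinal an) |: [set x : 'I_n | (x < a)%N].
  by apply/setP => x; rewrite !inE ltnS leq_eqVlt -val_eqE.
by rewrite cardsU1 IH ?(ltnW an) // inE ltnn.
Qed.

Lemma construction (d : nat) (L : seq nat) : (0 < d)%N -> all (fun l => l < d)%N L ->
  exists n (D : {set {set 'I_n}}), [/\ is_complex D, forest D, dimp1 D = d &
     Qp D = 'X^d + \sum_(l <- L) ('X^(l.+1) - 'X^l)].
Proof.
move=> d0 Ld.
pose e := size L; pose n := (d + e)%N.
exists n.
pose F := Fc n d L.
pose sq j := [seq F t | t <- iota 0 j.+1].
exists (gen [set x in sq e]).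
have Lnth : forall u, (u < e)%N -> (nth 0%N L u < d)%N.
  by move=> u hu; apply: (all_nthP 0%N Ld).
have lvl_le : forall t, (t <= e)%N -> (lvl d L t <= d)%N.
  by case=> [|u] //= ue; apply: ltnW; apply: Lnth.
have inF : forall t x, (x \in F t) =
    (x < lvl d L t)%N || ((0 < t)%N && (val x == d + t.-1)%N).
  by move=> t x; rewrite inE.
have Kv : forall t u (x : 'I_n), (u <= e)%N -> (0 < t)%N ->
    val x = (d + t.-1)%N -> x \in F u -> u = t.
  move=> t u x ue t0 xv; rewrite inF xv => /orP[h|/andP[u0 /eqP h]].
    by have := leq_trans h (lvl_le u ue); rewrite ltnNge leq_addr.
  rewrite xv in h; move/addnI: h.
  by case: t t0 {xv} => // t _; case: u u0 ue => // u _ _ /= ->.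
have F0E : F 0%N = [set x : 'I_n | (x < d)%N] by apply/setP => x; rewrite !inE orbF.
have cF0 : #|F 0%N| = d by rewrite F0E card_core // leq_addr.
have hu' : forall u, (u < e)%N -> (d + u < n)%N by move=> u hu; rewrite ltn_add2l.
have FSE : forall u (hu : (d + u < n)%N),
   F u.+1 = (Ordinal hu) |: [set x : 'I_n | (x < nth 0%N L u)%N].
  by move=> u hu; apply/setP => x; rewrite !inE /= orbC -val_eqE.
have cFS : forall u, (u < e)%N -> #|F u.+1| = (nth 0%N L u).+1.
  move=> u hu; rewrite (FSE u (hu' u hu)) cardsU1 card_core; last first.
    by apply: (leq_trans (ltnW (Lnth u hu))); rewrite leq_addr.
  by rewrite inE /= ltnNge (leq_trans (ltnW (Lnth u hu))) ?leq_addr.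
have cFI : forall u, (u < e)%N -> #|F 0%N :&: F u.+1| = nth 0%N L u.
  move=> u hu; have -> : F 0%N :&: F u.+1 = [set x : 'I_n | (x < nth 0%N L u)%N].
    apply/setP => x; rewrite F0E (FSE u (hu' u hu)) !inE /=.
    case: (ltnP x (nth 0%N L u)) => h; first by rewrite (ltn_trans h (Lnth u hu)) orbT.
    rewrite orbF; apply/andP => -[xd /eqP xe]; move/eqP: xe; rewrite -val_eqE /= => /eqP xe.
    by move: xd; rewrite xe ltnNge leq_addr.
  by rewrite card_core // (leq_trans (ltnW (Lnth u hu))) // leq_addr.
have cFle : forall t, (t <= e)%N -> (#|F t| <= d)%N.
  by case=> [|u] ue; [rewrite cF0 | rewrite cFS //; apply: Lnth].
have memsq : forall X, X \in sq e -> exists2 t, (t <= e)%N & X = F t.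
  by move=> X /mapP[t]; rewrite mem_iota add0n ltnS => /andP[_ te] ->; exists t.
have Fsq : forall t, (t <= e)%N -> F t \in sq e.
  by move=> t te; apply: map_f; rewrite mem_iota add0n ltnS te.
have QpE : forall j, (j <= e)%N ->
    Qp (gen [set x in sq j]) = 'X^d + \sum_(l <- take j L) ('X^(l.+1) - 'X^l).
  elim=> [|j IH] je.
    by rewrite take0 big_nil addr0 /sq /= Qp_single cF0.
  have sqS : sq j.+1 = rcons (sq j) (F j.+1).
    by rewrite /sq -[j.+2]addn1 iotaD map_cat cats1.
  have G0 : F 0%N \in sq j by apply: map_f; rewrite mem_iota.
  have HG : forall H, H \in sq j -> H :&: F j.+1 \subset F 0%N :&: F j.+1.
    move=> H /mapP[u]; rewrite mem_iota add0n ltnS => /andP[_ uj] ->.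
    apply/subsetP => x; rewrite !in_setI => /andP[xu xj]; rewrite xj andbT.
    move: (xj); rewrite inF /= => /orP[h|/eqP h].
      by rewrite F0E inE (ltn_trans h (Lnth j je)).
    have := Kv j.+1 u x (leq_trans uj (ltnW je)) isT h xu; lia.
  rewrite sqS (Qp_step G0 HG) IH ?(ltnW je) // cFS // cFI //.
  by rewrite (take_nth 0%N je) -cats1 big_cat big_seq1 !addrA.
have anti : forall u t, (u <= e)%N -> (t <= e)%N -> F u \subset F t -> u = t.
  move=> u t ue te /subsetP sub.
  case: u ue sub => [|u] ue sub; last first.
    have hx : (d + u < n)%N by rewrite ltn_add2l.
    apply: esym; apply: (Kv u.+1 t (Ordinal hx)) => //; apply: sub.
    by rewrite inF /= eqxx orbT.
  case: t te sub => [|t] te sub //.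
  have hy : (d.-1 < n)%N by rewrite /n; lia.
  have := sub (Ordinal hy); rewrite !inF /= => /(_ _).
  have -> : (d.-1 < d)%N by lia.
  move=> /(_ isT) /orP[h|h].
    by have := Lnth t te; lia.
  by move/eqP: h; lia.
have antiS : forall A B, A \in [set x in sq e] -> B \in [set x in sq e] ->
    A \subset B -> A = B.
  move=> A B; rewrite !inE => /memsq[u ue ->] /memsq[t te ->] AB.
  by rewrite (anti u t ue te AB).
have fD : facets (gen [set x in sq e]) = [set x in sq e] by apply: facets_gen.
split.
- split.
    move=> i; rewrite inE; apply/existsP; case: (ltnP i d) => id.
      exists (F 0%N); rewrite inE Fsq //= sub1set F0E inE id.
      done.
    have hi : (i < d + e)%N := ltn_ord i.
    have te : (i - d < e)%N by lia.
    exists (F (i - d).+1); rewrite inE Fsq //= sub1set inF /=.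
    by rewrite subnKC // eqxx orbT.
  move=> A B BA; rewrite !inE => /existsP[G /andP[GS AG]].
  by apply/existsP; exists G; rewrite GS (subset_trans BA AG).
- move=> S S0; rewrite fD => SD.
  have antiS' : forall A B, A \in S -> B \in S -> A \subset B -> A = B.
    by move=> A B AS BS; apply: antiS; apply: (subsetP SD).
  have fS := facets_gen antiS'.
  rewrite /has_leaf.
  case/set0Pn: (S0) => X0 X0S.
  have [S1|S1] := eqVneq #|S| 1%N.
    by apply/existsP; exists X0; rewrite /is_leaf fS X0S S1.
  have [t0 t0e eX0] : exists2 t, (t <= e)%N & X0 = F t.
    by apply: memsq; move: (subsetP SD X0 X0S); rewrite inE.
  have It0 : (fun t : 'I_e.+1 => F t \in S) (Ordinal (n:=e.+1) (m:=t0) t0e).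
    by rewrite /= -eX0.
  case: (@arg_minnP _ _ (fun t : 'I_e.+1 => F t \in S) (fun t => lvl d L t) It0).
  move=> t tS tmin.
  have : (0 < #|S :\ F t|)%N.
    move: S1; rewrite (cardsD1 (F t) S) tS add1n.
    by case: #|S :\ F t|.
  case/card_gt0P => G; rewrite !inE => /andP[GF GS].
  have [v ve eG] : exists2 t, (t <= e)%N & G = F t.
    by apply: memsq; move: (subsetP SD G GS); rewrite inE.
  apply/existsP; exists (F t); rewrite /is_leaf fS tS /=.
  apply/orP; right; apply/existsP; exists G; rewrite GS GF /=.
  apply/forallP => H; apply/implyP => HS; apply/implyP => HF.
  have [u ue eH] : exists2 t, (t <= e)%N & H = F t.
    by apply: memsq; move: (subsetP SD H HS); rewrite inE.
  apply/subsetP => x; rewrite !in_setI => /andP[xH xF]; rewrite xF andbT.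
  move: (xF); rewrite inF => /orP[h|/andP[t1 /eqP h]]; last first.
    have xu : x \in F u by rewrite -eH.
    have ut := Kv t u x ue t1 h xu.
    by move: HF; rewrite eH ut eqxx.
  have vS : (fun t : 'I_e.+1 => F t \in S) (Ordinal (n:=e.+1) (m:=v) ve).
    by rewrite /= -eG.
  have := tmin _ vS => /= tv.
  by rewrite eG inF (leq_trans h tv).
- apply/eqP; rewrite eqn_leq; apply/andP; split.
    apply/bigmax_leqP => X; rewrite inE => /existsP[G /andP[]]; rewrite inE.
    move=> /memsq[t te ->] XG.
    exact: leq_trans (subset_leq_card XG) (cFle t te).
  rewrite -{1}cF0.
  apply: (@leq_bigmax_cond _ (fun X => X \in gen [set x in sq e]) (fun X => #|X|)).
  by rewrite inE; apply/existsP; exists (F 0%N); rewrite inE Fsq //= subxx.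
- by rewrite QpE // take_size.
Qed.

Lemma count_iota (g : nat -> nat) j m :
  sumn [seq ((i == j) * g i)%N | i <- iota 0 m] = ((j < m) * g j)%N.
Proof.
elim: m => [|m IH] //.
rewrite -addn1 iotaD map_cat sumn_cat IH /= addn0 add0n addn1.
case: (ltngtP j m) => [jm|mj|->].
- by rewrite ltnS (ltnW jm) mul1n mul0n addn0.
- by rewrite ltnS leqNgt mj.
- by rewrite ltnSn mul0n mul1n.
Qed.

Lemma sum_coefXn (s : seq nat) j :
  \sum_(l <- s) (('X^l : {poly int})`_j) = (count_mem j s)%:R.
Proof.
elim: s => [|x s IH]; first by rewrite big_nil.
by rewrite big_cons IH coefXn /= natrD eq_sym.
Qed.

Lemma iv_ii f : (0 < size f)%N -> (forall i, (i < size f)%N -> 0 < (bpoly f)`_i) ->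
  exists n (D : {set {set 'I_n}}), [/\ is_complex D, forest D & has_fvector D f].
Proof.
move=> d0 bpos.
pose d := size f.
pose cnt j := (absz ((bpoly f)`_j)).-1.
pose L := flatten [seq nseq (cnt j) j | j <- iota 0 d].
have Ld : all (fun l => l < d)%N L.
  apply/allP => l /flatten_mapP[j]; rewrite mem_iota add0n => /andP[_ jd].
  by case/nseqP => -> _.
have [n [D [cD fD dD QD]]] := construction d0 Ld.
exists n, D; split => //; split => //.
have cntL : forall j, count_mem j L = ((j < d) * cnt j)%N.
  move=> j; rewrite /L count_flatten -map_comp.
  rewrite -(count_iota cnt j d); congr sumn; apply: eq_map => i /=.
  by rewrite count_nseq.
have PE : \sum_(i < d) ('X^i : {poly int}) = \poly_(i < d) 1.
  by rewrite poly_def; apply: eq_bigr => i _; rewrite scale1r.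
have eB : bpoly f = \sum_(j < d) 'X^j + \sum_(l <- L) 'X^l.
  apply/polyP => j; rewrite coefD PE coef_poly.
  rewrite [X in _ = _ + X]coef_sum sum_coefXn cntL.
  case: (ltnP j d) => jd.
    rewrite mul1n; have := bpos j jd; rewrite /cnt.
    case: ((bpoly f)`_j) => [[|m]|m] //= _.
    by rewrite natz; lia.
  by rewrite mul0n addr0 nth_default // (leq_trans (size_bpoly f)).
have QD' : Qp D = cpoly f.
  rewrite QD cpolyE eB mulrDr -subrX1 mulr_sumr.
  have -> : \sum_(l <- L) ('X^(l.+1) - 'X^l) = \sum_(l <- L) (('X - 1) * 'X^l) :> {poly int}.
    by apply: eq_bigr => l _; rewrite mulrBl exprS mul1r.
  by ring.
have Dle : forall X, X \in D -> (#|X| <= d)%N.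
  by move=> X XD; move: (@leq_bigmax_cond _ (fun F => F \in D) (fun F => #|F|) X XD); rewrite -/(dimp1 D) dD.
move=> i id.
have eq : \sum_(i < d.+1) (#|[set X in D | #|X| == i]|)%:Z *: ('X - 1)^+i =
          \sum_(i < d.+1) fm1 f i *: ('X - 1)^+i.
  by rewrite -(Qp_card Dle) QD'.
by have := @coef_shift d.+1 (fun i => (#|[set X in D | #|X| == i]|)%:Z) (fm1 f) eq i.+1 id.
Qed.

Theorem theorem1p1 (f : seq int) :
  (0 < size f)%N -> (forall i : nat, (i < size f)%N -> (0 < f`_i)%R) ->
  [<->
    (exists (n : nat) (D : {set {set 'I_n}}),
        [/\ is_complex D, quasi_forest D & has_fvector D f]);
    (exists (n : nat) (D : {set {set 'I_n}}),
        [/\ is_complex D, forest D & has_fvector D f]);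
    (forall k : nat, (1 <= k <= size f)%N ->
        (0 < \sum_(k <= i < (size f).+1) (cpoly f)`_i)%R);
    (forall i : nat, (i < size f)%N -> (0 < (bpoly f)`_i)%R)].
Proof.
move=> d0 fpos.
have i_iii : (exists (n : nat) (D : {set {set 'I_n}}),
        [/\ is_complex D, quasi_forest D & has_fvector D f]) ->
    (forall k : nat, (1 <= k <= size f)%N ->
        (0 < \sum_(k <= i < (size f).+1) (cpoly f)`_i)%R).
  by move=> [n [D [cD qD hD]]]; exact: qf_tail fpos cD qD hD.
have iii_iv : (forall k : nat, (1 <= k <= size f)%N ->
        (0 < \sum_(k <= i < (size f).+1) (cpoly f)`_i)%R) ->
    (forall i : nat, (i < size f)%N -> (0 < (bpoly f)`_i)%R).
  move=> h i id; have := h i.+1; rewrite tail_cb /=; last by rewrite id.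
  by apply; rewrite id.
have iv_iii : (forall i : nat, (i < size f)%N -> (0 < (bpoly f)`_i)%R) ->
    (forall k : nat, (1 <= k <= size f)%N ->
        (0 < \sum_(k <= i < (size f).+1) (cpoly f)`_i)%R).
  move=> h k hk; rewrite tail_cb //; apply: h.
  by case/andP: hk; case: k => // k _.
have ii_i : (exists (n : nat) (D : {set {set 'I_n}}),
        [/\ is_complex D, forest D & has_fvector D f]) ->
    (exists (n : nat) (D : {set {set 'I_n}}),
        [/\ is_complex D, quasi_forest D & has_fvector D f]).
  by move=> [n [D [cD fD hD]]]; exists n, D; split => //; apply: forest_qf.
have iv_ii' := iv_ii d0.
tfae.
- by move=> h; apply: iv_ii'; apply: iii_iv; apply: i_iii.
- by move=> h; apply: i_iii; apply: ii_i.
- exact: iii_iv.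
- by move=> h; apply: ii_i; apply: iv_ii'.
Qed.
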